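(* Let $\alpha\in(0,1/2)$ and $v\in\mathcal{C}^\alpha(\mathbb{R}^d)$. Assume that $I^{\mathrm{It\hat o}}_k(v,dv)$ converges uniformly to a limit $I^{\mathrm{It\hat o}}(v,dv)$ as $k\to\infty$. Then $[v,v]_k$ converges uniformly to a limit $[v,v]$. If moreover \[ C:=\sup_k\sup_{0\le m<m'\le2^k}\frac{\big|I^{\mathrm{It\hat o}}_k(v,dv)(m'2^{-k})-I^{\mathrm{It\hat o}}_k(v,dv)(m2^{-k})-v(m2^{-k})\big(v(m'2^{-k})-v(m2^{-k})\big)\big|}{|(m'-m)2^{-k}|^{2\alpha}}<\infty, \] then $[v,v]\in\mathcal{C}^{2\alpha}$ and $\|[v,v]\|_{2\alpha}\lesssim C+\|v\|_\alpha^2$.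
   Context: For $p\in\mathbb{N}$, $1\le m\le2^p$: $t^0_{pm}=(m-1)2^{-p}$, $t^2_{pm}=m2^{-p}$. For continuous $f:[0,1]\to E$ the Schauder coefficients are $f_{-10}=f(0)$, $f_{00}=f(1)-f(0)$, $f_{p0}=0$ ($p\ge1$), $f_{pm}=2f((2m-1)2^{-p-1})-f((m-1)2^{-p})-f(m2^{-p})$ ($p\ge0,m\ge1$); $\|f\|_\alpha:=\sup_{p,m}2^{p\alpha}|f_{pm}|$, $\mathcal{C}^\alpha:=\{f\text{ continuous}:\|f\|_\alpha<\infty\}$ (for $\alpha\in(0,1)$ equal to the $\alpha$-Hölder space with equivalent norm). For $v=(v^1,\dots,v^d)$, $I^{\mathrm{It\hat o}}_k(v,dv)$ is the $d\times d$ matrix $(I^{\mathrm{It\hat o}}_k(v^i,dv^j))_{i,j}$ with \[ I^{\mathrm{It\hat o}}_k(g,dh)(t):=\sum_{m=1}^{2^k}g(t^0_{km})\big(h(t^2_{km}\wedge t)-h(t^0_{km}\wedge t)\big), \] $[v,v]_k:=([v^i,v^j]_k)_{i,j}$ with $[g,h]_k(t):=\sum_{m=1}^{2^k}(g(t^2_{km}\wedge t)-g(t^0_{km}\wedge t))(h(t^2_{km}\wedge t)-h(t^0_{km}\wedge t))$, and $v(s)(v(t)-v(s))$ denotes the matrix $(v^i(s)(v^j(t)-v^j(s)))_{i,j}$. *)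

(* Defs.v *)
From Stdlib Require Import Reals.
Open Scope R_scope.

Fixpoint rsum (n : nat) (f : nat -> R) : R :=
  match n with O => 0 | S n' => rsum n' f + f n' end.

Definition dy (k j : nat) : R := INR j / 2 ^ k.

Definition cont01 (f : R -> R) : Prop :=
  forall t, 0 <= t <= 1 -> forall eps, 0 < eps -> exists delta, 0 < delta /\
    forall s, 0 <= s <= 1 -> Rabs (s - t) < delta -> Rabs (f s - f t) < eps.

Definition schauder_coef (f : R -> R) (p m : nat) : R :=
  2 * f (INR (2 * m - 1) / 2 ^ (S p)) - f (INR (m - 1) / 2 ^ p) - f (INR m / 2 ^ p).

(* holder_bound a f M  <->  ||f||_a <= M  (sup over all Schauder indices,
   including f_{-1,0} = f(0), f_{00} = f(1) - f(0), f_{p0} = 0 for p >= 1) *)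
Definition holder_bound (a : R) (f : R -> R) (M : R) : Prop :=
  Rpower 2 (- a) * Rabs (f 0) <= M /\
  Rabs (f 1 - f 0) <= M /\
  0 <= M /\
  forall p m : nat, (1 <= m)%nat -> (m <= 2 ^ p)%nat ->
    Rpower 2 (INR p * a) * Rabs (schauder_coef f p m) <= M.

Definition in_C (a : R) (f : R -> R) : Prop :=
  cont01 f /\ exists M, holder_bound a f M.

(* Vector valued functions v : nat -> R -> R, components v i for i < d,
   with the max norm on R^d; matrix valued Q : nat -> nat -> R -> R with
   the max-entry norm on d x d matrices. *)
Definition vec_in_C (d : nat) (a : R) (v : nat -> R -> R) : Prop :=
  forall i, (i < d)%nat -> in_C a (v i).
Definition vec_holder_bound (d : nat) (a : R) (v : nat -> R -> R) (M : R) : Prop :=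
  forall i, (i < d)%nat -> holder_bound a (v i) M.
Definition mat_in_C (d : nat) (a : R) (Q : nat -> nat -> R -> R) : Prop :=
  forall i j, (i < d)%nat -> (j < d)%nat -> in_C a (Q i j).
Definition mat_holder_bound (d : nat) (a : R) (Q : nat -> nat -> R -> R) (M : R) : Prop :=
  forall i j, (i < d)%nat -> (j < d)%nat -> holder_bound a (Q i j) M.

Definition ito_k (k : nat) (g h : R -> R) (t : R) : R :=
  rsum (2 ^ k) (fun j => g (dy k j) * (h (Rmin (dy k (S j)) t) - h (Rmin (dy k j) t))).

Definition qv_k (k : nat) (g h : R -> R) (t : R) : R :=
  rsum (2 ^ k) (fun j => (g (Rmin (dy k (S j)) t) - g (Rmin (dy k j) t))
                        * (h (Rmin (dy k (S j)) t) - h (Rmin (dy k j) t))).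

Definition mat_unif_conv (d : nat) (F : nat -> nat -> nat -> R -> R)
    (L : nat -> nat -> R -> R) : Prop :=
  forall eps, 0 < eps -> exists N, forall k, (N <= k)%nat ->
    forall i j, (i < d)%nat -> (j < d)%nat -> forall t, 0 <= t <= 1 ->
      Rabs (F k i j t - L i j t) < eps.

Definition ito_mat (v : nat -> R -> R) : nat -> nat -> nat -> R -> R :=
  fun k i j => ito_k k (v i) (v j).
Definition qv_mat (v : nat -> R -> R) : nat -> nat -> nat -> R -> R :=
  fun k i j => qv_k k (v i) (v j).

Definition ito_ratio_bound (d : nat) (a : R) (v : nat -> R -> R) (C : R) : Prop :=
  forall k m m' : nat, (m < m')%nat -> (m' <= 2 ^ k)%nat ->
    forall i j, (i < d)%nat -> (j < d)%nat ->
      Rabs (ito_k k (v i) (v j) (dy k m') - ito_k k (v i) (v j) (dy k m)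
            - v i (dy k m) * (v j (dy k m') - v j (dy k m)))
      <= C * Rpower (INR (m' - m) / 2 ^ k) (2 * a).

(* Main.v *)
Require Import Defs.
From Stdlib Require Import Reals Lra Lia.
Open Scope R_scope.

Lemma rsum_ext n f g : (forall j, (j < n)%nat -> f j = g j) -> rsum n f = rsum n g.
Proof. induction n; simpl; intros H; auto. rewrite IHn by (intros; apply H; lia). rewrite H by lia; auto. Qed.

Lemma rsum_plus n f g : rsum n (fun j => f j + g j) = rsum n f + rsum n g.
Proof. induction n; simpl; [ring|rewrite IHn; ring]. Qed.

Lemma rsum_tele n F : rsum n (fun j => F (S j) - F j) = F n - F O.
Proof. induction n; simpl; [ring|rewrite IHn; ring]. Qed.

Lemma pow2_pos k : 0 < 2 ^ k.
Proof. apply pow_lt; lra. Qed.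

Lemma dy_nonneg k j : 0 <= dy k j.
Proof. unfold dy. apply Rmult_le_pos; [apply pos_INR| left; apply Rinv_0_lt_compat, pow2_pos]. Qed.

Lemma dy_mono k j : dy k j <= dy k (S j).
Proof. unfold dy. apply Rmult_le_compat_r; [left; apply Rinv_0_lt_compat, pow2_pos|].
 apply le_INR; lia. Qed.

Lemma INR2 : INR 2 = 2. Proof. simpl; ring. Qed.

Lemma dy_0 k : dy k 0 = 0. Proof. unfold dy; simpl; field. apply pow_nonzero; lra. Qed.
Lemma dy_full k : dy k (2 ^ k) = 1.
Proof. unfold dy; rewrite pow_INR, INR2; field; apply pow_nonzero; lra. Qed.

Lemma qv_identity k g h t : 0 <= t <= 1 ->
  qv_k k g h t = g t * h t - g 0 * h 0 - ito_k k g h t - ito_k k h g t.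
Proof.
  intros Ht. unfold qv_k, ito_k.
  set (y := fun j => Rmin (dy k j) t).
  assert (E: forall j, (fun j => (g (y (S j)) - g (y j)) * (h (y (S j)) - h (y j))) j
     + g (dy k j) * (h (y (S j)) - h (y j)) + h (dy k j) * (g (y (S j)) - g (y j))
     = (fun z => g z * h z) (y (S j)) - (fun z => g z * h z) (y j)).
  { intros j. unfold y. simpl. destruct (Rle_dec (dy k j) t).
    - rewrite (Rmin_left (dy k j) t r). ring.
    - assert (t < dy k j) by lra. pose proof (dy_mono k j).
      rewrite (Rmin_right (dy k j) t), (Rmin_right (dy k (S j)) t) by lra. ring. }
  pose proof (rsum_tele (2 ^ k) (fun j => (fun z => g z * h z) (y j))) as T.
  simpl in T. rewrite <- (rsum_ext _ _ _ (fun j _ => E j)) in T.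
  rewrite !rsum_plus in T.
  unfold y in T. rewrite dy_full, dy_0 in T.
  rewrite (Rmin_left 0 t) in T by lra. rewrite (Rmin_right 1 t) in T by lra.
  lra.
Qed.

Lemma qv_at0 k g h : qv_k k g h 0 = 0.
Proof.
  unfold qv_k. transitivity (rsum (2^k) (fun _ => 0)).
  - apply rsum_ext; intros j _. rewrite !Rmin_right by (apply dy_nonneg). ring.
  - clear; induction (2^k)%nat; simpl; [auto|rewrite IHn; ring].
Qed.

Definition phi (x s : R) : R := Rmax 0 (Rmin 1 (Rmin x s)).

Lemma phi_lip x s t : Rabs (phi x s - phi x t) <= Rabs (s - t).
Proof. unfold phi, Rmin, Rmax; repeat destruct Rle_dec; unfold Rabs; repeat destruct Rcase_abs; lra. Qed.
Lemma phi_range x s : 0 <= phi x s <= 1.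
Proof. unfold phi, Rmin, Rmax; repeat destruct Rle_dec; lra. Qed.
Lemma phi_eq x t : 0 <= x -> 0 <= t <= 1 -> phi x t = Rmin x t.
Proof. intros; unfold phi, Rmin, Rmax; repeat destruct Rle_dec; lra. Qed.

Lemma cont_phi g x t : cont01 g -> continuity_pt (fun s => g (phi x s)) t.
Proof.
  intros Hg. unfold continuity_pt, continue_in, limit1_in, limit_in; simpl; unfold R_dist.
  intros eps Heps. destruct (Hg (phi x t) (phi_range x t) eps Heps) as [del [Hd H]].
  exists del; split; auto. intros s [_ Hs].
  apply H; [apply phi_range|]. eapply Rle_lt_trans; [apply phi_lip|auto].
Qed.

Lemma cont_rsum n (F : nat -> R -> R) x : (forall j, continuity_pt (F j) x) ->
  continuity_pt (fun t => rsum n (fun j => F j t)) x.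
Proof.
  intros H; induction n; simpl.
  - apply continuity_pt_const; intros a b; auto.
  - change (continuity_pt (plus_fct (fun t => rsum n (fun j => F j t)) (F n)) x).
    apply continuity_pt_plus; auto.
Qed.

Definition qvc k g h t := rsum (2 ^ k) (fun j => (g (phi (dy k (S j)) t) - g (phi (dy k j) t))
                        * (h (phi (dy k (S j)) t) - h (phi (dy k j) t))).

Lemma qvc_eq k g h t : 0 <= t <= 1 -> qvc k g h t = qv_k k g h t.
Proof. intros Ht; unfold qvc, qv_k; apply rsum_ext; intros j _.
  rewrite !phi_eq by (auto; apply dy_nonneg). reflexivity. Qed.

Lemma qvc_cont k g h t : cont01 g -> cont01 h -> continuity_pt (qvc k g h) t.
Proof.
  intros Hg Hh. unfold qvc. apply (cont_rsum _ (fun j t => (g (phi (dy k (S j)) t) - g (phi (dy k j) t))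
                        * (h (phi (dy k (S j)) t) - h (phi (dy k j) t)))).
  intros j.
  change (continuity_pt (mult_fct (minus_fct (fun t => g (phi (dy k (S j)) t)) (fun t => g (phi (dy k j) t)))
    (minus_fct (fun t => h (phi (dy k (S j)) t)) (fun t => h (phi (dy k j) t)))) t).
  apply continuity_pt_mult; apply continuity_pt_minus; apply cont_phi; auto.
Qed.

Lemma cont_eps f t : continuity_pt f t -> forall eps, 0 < eps -> exists del, 0 < del /\
  forall s, Rabs (s - t) < del -> Rabs (f s - f t) < eps.
Proof.
  intros H eps He. unfold continuity_pt, continue_in, limit1_in, limit_in in H; simpl in H; unfold R_dist in H.
  destruct (H eps He) as [del [Hd Hs]]. exists del; split; auto. intros s Hst.
  destruct (Req_dec t s). subst; rewrite Rminus_diag, Rabs_R0; auto.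
  apply Hs; split; auto. split; auto. constructor.
Qed.

Lemma rp_inv q a : Rpower (/ 2 ^ q) a * Rpower 2 (INR q * a) = 1.
Proof.
  unfold Rpower. rewrite <- exp_plus. rewrite ln_Rinv by apply pow2_pos.
  rewrite ln_pow by lra. replace (a * - (INR q * ln 2) + INR q * a * ln 2) with 0 by ring.
  apply exp_0.
Qed.

Lemma rp_pos x y : 0 < Rpower x y. Proof. unfold Rpower; apply exp_pos. Qed.

Lemma rp2_le a : 0 < a < 1/2 -> Rpower 2 a <= 3/2.
Proof.
  intros Ha. assert (H: Rpower 2 a * Rpower 2 a < 2).
  { rewrite <- Rpower_plus. rewrite <- (Rpower_1 2) at 2 by lra. apply Rpower_lt; lra. }
  pose proof (rp_pos 2 a). nra.
Qed.

Lemma rp_S q a : Rpower 2 (INR (S q) * a) = Rpower 2 a * Rpower 2 (INR q * a).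
Proof. rewrite <- Rpower_plus. f_equal. rewrite S_INR. ring. Qed.

Lemma dy_double q n : dy (S q) (2 * n) = dy q n.
Proof. unfold dy. rewrite mult_INR, INR2. simpl. field. apply pow_nonzero; lra. Qed.

Lemma sch_dy f q u : schauder_coef f q (S u) =
  2 * f (dy (S q) (S (2 * u))) - f (dy q u) - f (dy q (S u)).
Proof.
  unfold schauder_coef. replace (2 * S u - 1)%nat with (S (2 * u)) by lia.
  replace (S u - 1)%nat with u by lia. reflexivity.
Qed.

Lemma hb_nonneg a f M : holder_bound a f M -> 0 <= M.
Proof. intros [_ [_ [H _]]]; auto. Qed.

Lemma v_incr a f M : 0 < a < 1/2 -> holder_bound a f M -> forall q n, (S n <= 2 ^ q)%nat ->
  Rpower 2 (INR q * a) * Rabs (f (dy q (S n)) - f (dy q n)) <= 3 * M.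
Proof.
  intros Ha Hf. pose proof (hb_nonneg _ _ _ Hf) as HM. destruct Hf as [_ [H1 [_ Hs]]].
  pose proof (rp2_le a Ha) as HA. pose proof (rp_pos 2 a) as HA0.
  induction q; intros n Hn.
  - simpl in Hn. assert (n = 0)%nat by lia. subst. rewrite Rmult_0_l, Rpower_O by lra.
    replace (dy 0 1) with 1 by (unfold dy; simpl; field). rewrite dy_0. lra.
  - rewrite rp_S. pose proof (rp_pos 2 (INR q * a)) as HW.
    assert (Hpow: (2 ^ S q = 2 * 2 ^ q)%nat) by (simpl; lia).
    destruct (Nat.Even_or_Odd n) as [[u Hu]|[u Hu]]; subst n.
    + assert (Hu: (S u <= 2 ^ q)%nat) by lia.
      specialize (IHq u Hu). specialize (Hs q (S u) ltac:(lia) Hu). rewrite sch_dy in Hs.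
      rewrite dy_double.
      set (X := f (dy q (S u)) - f (dy q u)) in *.
      set (c := 2 * f (dy (S q) (S (2 * u))) - f (dy q u) - f (dy q (S u))) in *.
      replace (f (dy (S q) (S (2 * u))) - f (dy q u)) with ((X + c) / 2) by (unfold X, c; field).
      assert (Rabs ((X + c)/2) <= (Rabs X + Rabs c)/2).
      { unfold Rdiv. rewrite Rabs_mult, (Rabs_right (/2)) by lra.
        apply Rmult_le_compat_r; [lra|apply Rabs_triang]. }
      assert (Rpower 2 (INR q * a) * Rabs ((X + c)/2) <= 2 * M).
      { apply Rle_trans with (Rpower 2 (INR q * a) * ((Rabs X + Rabs c)/2)).
        apply Rmult_le_compat_l; lra. lra. }
      pose proof (Rabs_pos ((X + c)/2)). nra.
    + assert (Hu: (S u <= 2 ^ q)%nat) by lia.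
      specialize (IHq u Hu). specialize (Hs q (S u) ltac:(lia) Hu). rewrite sch_dy in Hs.
      replace (S (2 * u + 1)) with (2 * S u)%nat by lia. rewrite dy_double.
      replace (2 * u + 1)%nat with (S (2 * u)) by lia.
      set (X := f (dy q (S u)) - f (dy q u)) in *.
      set (c := 2 * f (dy (S q) (S (2 * u))) - f (dy q u) - f (dy q (S u))) in *.
      replace (f (dy q (S u)) - f (dy (S q) (S (2 * u)))) with ((X - c) / 2) by (unfold X, c; field).
      assert (Rabs ((X - c)/2) <= (Rabs X + Rabs c)/2).
      { unfold Rdiv. rewrite Rabs_mult, (Rabs_right (/2)) by lra.
        apply Rmult_le_compat_r; [lra|]. unfold Rminus. rewrite <- (Rabs_Ropp c). apply Rabs_triang. }
      assert (Rpower 2 (INR q * a) * Rabs ((X - c)/2) <= 2 * M).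
      { apply Rle_trans with (Rpower 2 (INR q * a) * ((Rabs X + Rabs c)/2)).
        apply Rmult_le_compat_l; lra. lra. }
      pose proof (Rabs_pos ((X - c)/2)). nra.
Qed.

Lemma dy_scale q r n : dy (q + r) (n * 2 ^ r) = dy q n.
Proof. unfold dy. rewrite mult_INR, pow_INR, INR2, pow_add. field.
  split; apply pow_nonzero; lra. Qed.

Lemma dy_range q n : (n <= 2 ^ q)%nat -> 0 <= dy q n <= 1.
Proof. intros H. split. apply dy_nonneg. unfold dy. apply le_INR in H. rewrite pow_INR, INR2 in H.
  pose proof (pow2_pos q). apply Rmult_le_reg_r with (2 ^ q); auto. field_simplify; lra. Qed.

Definition rbound (a : R) g h C := forall k m m' : nat, (m < m')%nat -> (m' <= 2 ^ k)%nat ->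
      Rabs (ito_k k g h (dy k m') - ito_k k g h (dy k m)
            - g (dy k m) * (h (dy k m') - h (dy k m)))
      <= C * Rpower (INR (m' - m) / 2 ^ k) (2 * a).

Lemma qv_incr_k a g h C M : 0 < a < 1/2 -> rbound a g h C -> rbound a h g C ->
  holder_bound a g M -> holder_bound a h M -> forall q r n, (S n <= 2 ^ q)%nat ->
  Rpower 2 (INR q * (2 * a)) * Rabs (qv_k (q + r) g h (dy q (S n)) - qv_k (q + r) g h (dy q n))
  <= 9 * M ^ 2 + 2 * C.
Proof.
  intros Ha R1 R2 Hg Hh q r n Hn.
  pose proof (v_incr _ _ _ Ha Hg q n Hn) as Vg.
  pose proof (v_incr _ _ _ Ha Hh q n Hn) as Vh.
  pose proof (Nat.pow_nonzero 2 r ltac:(lia)).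
  assert (Hm1: (n * 2 ^ r < S n * 2 ^ r)%nat) by (simpl; lia).
  assert (Hm2: (S n * 2 ^ r <= 2 ^ (q + r))%nat) by (rewrite Nat.pow_add_r; apply Nat.mul_le_mono_r; lia).
  specialize (R1 (q + r)%nat _ _ Hm1 Hm2). specialize (R2 (q + r)%nat _ _ Hm1 Hm2).
  assert (E: INR (S n * 2 ^ r - n * 2 ^ r) / 2 ^ (q + r) = / 2 ^ q).
  { replace (S n * 2 ^ r - n * 2 ^ r)%nat with (2 ^ r)%nat by (simpl; lia).
    rewrite pow_INR, INR2, pow_add. field. split; apply pow_nonzero; lra. }
  rewrite E, !dy_scale in R1, R2.
  assert (Hs: 0 <= dy q n <= 1) by (apply dy_range; lia).
  assert (Ht: 0 <= dy q (S n) <= 1) by (apply dy_range; lia).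
  rewrite !(qv_identity _ g h) by auto.
  set (s := dy q n) in *. set (t := dy q (S n)) in *.
  set (rho := Rpower (/ 2 ^ q) (2 * a)) in *.
  set (w := Rpower 2 (INR q * a)) in *.
  assert (Hw: Rpower 2 (INR q * (2 * a)) = w * w).
  { unfold w; rewrite <- Rpower_plus; f_equal; ring. }
  assert (Hwr: w * w * rho = 1).
  { rewrite <- Hw. unfold rho; rewrite Rmult_comm. rewrite <- (rp_inv q (2*a)). reflexivity. }
  rewrite Hw.
  set (I1t := ito_k (q + r) g h t) in *. set (I1s := ito_k (q + r) g h s) in *.
  set (I2t := ito_k (q + r) h g t) in *. set (I2s := ito_k (q + r) h g s) in *.
  set (X := g t - g s) in *. set (Y := h t - h s) in *.
  replace (g t * h t - g 0 * h 0 - I1t - I2t - (g s * h s - g 0 * h 0 - I1s - I2s))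
    with (X * Y - (I1t - I1s - g s * Y) - (I2t - I2s - h s * X)) by (unfold X, Y; ring).
  assert (T: Rabs (X * Y - (I1t - I1s - g s * Y) - (I2t - I2s - h s * X)) <= Rabs X * Rabs Y + 2 * C * rho).
  { unfold Rminus at 1. eapply Rle_trans; [apply Rabs_triang|].
    rewrite Rabs_Ropp. unfold Rminus at 1. eapply Rle_trans; [apply Rplus_le_compat_r, Rabs_triang|].
    rewrite Rabs_Ropp, Rabs_mult. unfold X, Y in *. lra. }
  assert (0 < w) by apply rp_pos.
  assert (HM: 0 <= M) by (eapply hb_nonneg; eauto).
  apply Rle_trans with (w * w * (Rabs X * Rabs Y + 2 * C * rho)).
  { apply Rmult_le_compat_l; [nra|exact T]. }
  replace (w * w * (Rabs X * Rabs Y + 2 * C * rho)) with ((w * Rabs X) * (w * Rabs Y) + 2 * C * (w * w * rho)) by ring.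
  rewrite Hwr.
  pose proof (Rabs_pos X). pose proof (Rabs_pos Y).
  assert ((w * Rabs X) * (w * Rabs Y) <= (3 * M) * (3 * M)).
  { apply Rmult_le_compat; try nra. }
  nra.
Qed.

Definition uconv (F : nat -> R -> R) (L : R -> R) := forall eps, 0 < eps -> exists N, forall k, (N <= k)%nat ->
  forall t, 0 <= t <= 1 -> Rabs (F k t - L t) < eps.

Lemma le_eps x B : (forall eps, 0 < eps -> x <= B + eps) -> x <= B.
Proof. intros H. destruct (Rle_dec x B); auto. specialize (H ((x - B)/2)). lra. Qed.

Lemma lim_incr F L W B s t q : uconv F L -> 0 < W -> 0 <= s <= 1 -> 0 <= t <= 1 ->
  (forall r, W * Rabs (F (q + r)%nat t - F (q + r)%nat s) <= B) -> W * Rabs (L t - L s) <= B.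
Proof.
  intros HU HW Hs Ht H. apply le_eps. intros eps He.
  destruct (HU (eps / (2 * W))) as [N HN]. { apply Rdiv_lt_0_compat; lra. }
  specialize (H N). pose proof (HN (q + N)%nat ltac:(lia) t Ht). pose proof (HN (q + N)%nat ltac:(lia) s Hs).
  set (a := F (q + N)%nat t) in *. set (b := F (q + N)%nat s) in *.
  assert (Rabs (L t - L s) <= Rabs (a - b) + 2 * (eps / (2 * W))).
  { revert H0 H1. unfold Rabs; repeat destruct Rcase_abs; lra. }
  assert (W * Rabs (L t - L s) <= W * (Rabs (a - b) + 2 * (eps / (2 * W)))) by (apply Rmult_le_compat_l; lra).
  replace (W * (Rabs (a - b) + 2 * (eps / (2 * W)))) with (W * Rabs (a - b) + eps) in H3 by (field; lra).
  lra.
Qed.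

Lemma hb_mono a f M M' : holder_bound a f M -> M <= M' -> holder_bound a f M'.
Proof. intros [H1 [H2 [H3 H4]]] HM. repeat split; try lra.
  intros p m Hm1 Hm2; specialize (H4 p m Hm1 Hm2); lra. Qed.

Lemma rp_ge1 y : 0 <= y -> 1 <= Rpower 2 y.
Proof. intros H. destruct H. rewrite <- (Rpower_O 2) by lra. left; apply Rpower_lt; lra.
  subst; rewrite Rpower_O; lra. Qed.

Lemma entry_bound a g h C M Q : 0 < a < 1/2 -> rbound a g h C -> rbound a h g C -> 0 <= C ->
  holder_bound a g M -> holder_bound a h M -> uconv (fun k => qv_k k g h) Q ->
  holder_bound (2 * a) Q (18 * (C + M ^ 2)).
Proof.
  intros Ha R1 R2 HC Hg Hh HU.
  pose proof (hb_nonneg _ _ _ Hg) as HM.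
  assert (Inc: forall q n, (S n <= 2 ^ q)%nat ->
    Rpower 2 (INR q * (2 * a)) * Rabs (Q (dy q (S n)) - Q (dy q n)) <= 9 * M ^ 2 + 2 * C).
  { intros q n Hn. apply (lim_incr (fun k => qv_k k g h) Q _ _ _ _ q HU).
    apply rp_pos. apply dy_range; lia. apply dy_range; lia.
    intros r. apply qv_incr_k; auto. }
  assert (Q0: Rabs (Q 0) <= 0).
  { apply le_eps; intros eps He. destruct (HU eps He) as [N HN].
    specialize (HN N (le_n _) 0 ltac:(lra)). simpl in HN. rewrite qv_at0 in HN.
    rewrite Rminus_0_l, Rabs_Ropp in HN. lra. }
  assert (0 <= M ^ 2) by (apply pow_le; auto).
  split; [|split; [|split]].
  - pose proof (rp_pos 2 (-(2*a))). pose proof (Rabs_pos (Q 0)). nra.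
  - specialize (Inc 0%nat 0%nat ltac:(simpl; lia)).
    rewrite Rmult_0_l, Rpower_O, dy_0 in Inc by lra.
    replace (dy 0 1) with 1 in Inc by (unfold dy; simpl; field). lra.
  - lra.
  - intros p m Hm1 Hm2. destruct m as [|u]; [lia|]. rewrite sch_dy.
    pose proof (Inc (S p) (2 * u)%nat ltac:(simpl; lia)) as I1.
    pose proof (Inc (S p) (S (2 * u))%nat ltac:(simpl; lia)) as I2.
    replace (S (S (2 * u))) with (2 * S u)%nat in I2 by lia.
    rewrite !dy_double in I1, I2. rewrite rp_S in I1, I2.
    pose proof (rp_ge1 (2 * a) ltac:(lra)). set (W := Rpower 2 (INR p * (2 * a))) in *.
    assert (0 < W) by apply rp_pos.
    set (A1 := Rabs (Q (dy (S p) (S (2 * u))) - Q (dy p u))) in *.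
    set (A2 := Rabs (Q (dy p (S u)) - Q (dy (S p) (S (2 * u))))) in *.
    assert (W * A1 <= 9 * M ^ 2 + 2 * C). { assert (0 <= A1) by apply Rabs_pos. nra. }
    assert (W * A2 <= 9 * M ^ 2 + 2 * C). { assert (0 <= A2) by apply Rabs_pos. nra. }
    assert (Rabs (2 * Q (dy (S p) (S (2 * u))) - Q (dy p u) - Q (dy p (S u))) <= A1 + A2).
    { unfold A1, A2. unfold Rabs; repeat destruct Rcase_abs; lra. }
    assert (W * Rabs (2 * Q (dy (S p) (S (2 * u))) - Q (dy p u) - Q (dy p (S u))) <= W * (A1 + A2))
      by (apply Rmult_le_compat_l; lra).
    lra.
Qed.

Lemma entry_cont g h Q : cont01 g -> cont01 h -> uconv (fun k => qv_k k g h) Q -> cont01 Q.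
Proof.
  intros Hg Hh HU t Ht eps He.
  destruct (HU (eps / 3)) as [N HN]; [lra|].
  destruct (cont_eps _ t (qvc_cont N g h t Hg Hh) (eps / 3)) as [del [Hd Hc]]; [lra|].
  exists del; split; auto. intros s Hs Hst.
  specialize (Hc s Hst). rewrite !qvc_eq in Hc by auto.
  pose proof (HN N (le_n _) s Hs). pose proof (HN N (le_n _) t Ht).
  revert Hc H H0. unfold Rabs; repeat destruct Rcase_abs; lra.
Qed.

Theorem mainTheorem16 :
  forall (alpha : R) (d : nat), 0 < alpha < 1 / 2 ->
  exists K : R, 0 < K /\
  forall v : nat -> R -> R,
    vec_in_C d alpha v ->
    (exists Ito : nat -> nat -> R -> R, mat_unif_conv d (ito_mat v) Ito) ->
    (exists QV : nat -> nat -> R -> R, mat_unif_conv d (qv_mat v) QV) /\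
    (forall QV : nat -> nat -> R -> R, mat_unif_conv d (qv_mat v) QV ->
       forall C : R, ito_ratio_bound d alpha v C ->
         mat_in_C d (2 * alpha) QV /\
         forall Mv : R, vec_holder_bound d alpha v Mv ->
           mat_holder_bound d (2 * alpha) QV (K * (C + Mv ^ 2))).
Proof.
  intros alpha d Ha. exists 18. split; [lra|]. intros v Hv [Ito HI]. split.
  - exists (fun i j t => v i t * v j t - v i 0 * v j 0 - Ito i j t - Ito j i t).
    intros eps He. destruct (HI (eps / 2)) as [N HN]; [lra|]. exists N.
    intros k Hk i j Hi Hj t Ht. unfold qv_mat. rewrite qv_identity by auto.
    pose proof (HN k Hk i j Hi Hj t Ht). pose proof (HN k Hk j i Hj Hi t Ht).
    unfold ito_mat in *. revert H H0. unfold Rabs; repeat destruct Rcase_abs; lra.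
  - intros QV HQ C HC.
    assert (UC: forall i j, (i < d)%nat -> (j < d)%nat -> uconv (fun k => qv_k k (v i) (v j)) (QV i j)).
    { intros i j Hi Hj eps He. destruct (HQ eps He) as [N HN]. exists N.
      intros k Hk t Ht. apply (HN k Hk i j Hi Hj t Ht). }
    assert (RB: forall i j, (i < d)%nat -> (j < d)%nat -> rbound alpha (v i) (v j) C).
    { intros i j Hi Hj k m m' H1 H2. apply HC; auto. }
    assert (C0: forall i, (i < d)%nat -> 0 <= C).
    { intros i Hi. pose proof (HC 0%nat 0%nat 1%nat ltac:(lia) ltac:(simpl; lia) i i Hi Hi).
      replace (INR (1 - 0) / 2 ^ 0) with 1 in H by (simpl; field).
      replace (Rpower 1 (2 * alpha)) with 1 in H.
      pose proof (Rabs_pos (ito_k 0 (v i) (v i) (dy 0 1) - ito_k 0 (v i) (v i) (dy 0 0) -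
        v i (dy 0 0) * (v i (dy 0 1) - v i (dy 0 0)))). lra.
      unfold Rpower. rewrite ln_1, Rmult_0_r, exp_0. reflexivity. }
    split.
    + intros i j Hi Hj. destruct (Hv i Hi) as [Ci [Mi HMi]]. destruct (Hv j Hj) as [Cj [Mj HMj]].
      split. apply (entry_cont (v i) (v j)); auto.
      exists (18 * (C + Rmax Mi Mj ^ 2)). apply entry_bound with (g := v i) (h := v j); auto.
      apply (C0 i Hi).
      apply hb_mono with Mi; auto. apply Rmax_l.
      apply hb_mono with Mj; auto. apply Rmax_r.
    + intros Mv HMv i j Hi Hj. apply entry_bound with (g := v i) (h := v j); auto.
      apply (C0 i Hi).
Qed.
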